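(* Let $\beta,\delta\in(0,1)$, $K>0$, and let $\eta_1,\eta_2\ge0$ be constants with $\delta>\eta_2$. Consider $$\frac{df}{dt}=\tfrac12 fm\beta L-\delta f-\eta_1 f,\qquad \frac{dm}{dt}=\tfrac12 fm\beta L-\delta m+\eta_2 m,\qquad L=1-\frac{f+m}{K}.$$ If $\beta K<2\delta+\eta_1-\eta_2$, then the equilibrium $(0,0)$ is globally asymptotically stable.
   Context: $f$ and $m$ are female and male densities. $\eta_1$ is the female removal (harvesting) rate and $\eta_2$ the male addition (stocking) rate; this is the ''female harvesting male stocking'' model. The standing assumption is $\delta>\eta_2$ whenever $\eta_2\neq0$. *)

(* Defs.v *)
From Stdlib Require Import Reals.
From Coquelicot Require Import Coquelicot.
Open Scope R_scope.

Definition Lfac (K f m : R) : R := 1 - (f + m) / K.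

Definition rhs_f (beta delta eta1 K f m : R) : R :=
  / 2 * f * m * beta * Lfac K f m - delta * f - eta1 * f.
Definition rhs_m (beta delta eta2 K f m : R) : R :=
  / 2 * f * m * beta * Lfac K f m - delta * m + eta2 * m.

Definition is_solution (beta delta eta1 eta2 K : R) (f m : R -> R) : Prop :=
  (forall t, 0 < t ->
     is_derive f t (rhs_f beta delta eta1 K (f t) (m t)) /\
     is_derive m t (rhs_m beta delta eta2 K (f t) (m t))) /\
  filterlim f (at_right 0) (locally (f 0)) /\
  filterlim m (at_right 0) (locally (m 0)).

Definition GAS_origin (beta delta eta1 eta2 K : R) : Prop :=
  (forall eps, 0 < eps -> exists d, 0 < d /\
     forall f m, is_solution beta delta eta1 eta2 K f m ->
       0 <= f 0 -> 0 <= m 0 -> f 0 < d -> m 0 < d ->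
       forall t, 0 <= t -> Rabs (f t) < eps /\ Rabs (m t) < eps) /\
  (forall f m, is_solution beta delta eta1 eta2 K f m ->
     0 <= f 0 -> 0 <= m 0 ->
     is_lim f p_infty 0 /\ is_lim m p_infty 0).

(* Main.v *)
Require Import Defs.
From Stdlib Require Import Reals Lra Psatz.
From Coquelicot Require Import Coquelicot.
Open Scope R_scope.

Definition rcE (g : R -> R) (a : R) : Prop :=
  forall eps, 0 < eps -> exists d, 0 < d /\ forall x, a < x < a + d -> Rabs (g x - g a) < eps.

Lemma rc_eps g a : filterlim g (at_right a) (locally (g a)) -> rcE g a.
Proof.
  intros H eps He.
  assert (HL : locally (g a) (fun y => Rabs (y - g a) < eps)).
  { exists (mkposreal eps He). intros y Hy. exact Hy. }
  destruct (H _ HL) as [d Hd].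
  exists d. split. apply cond_pos. intros x [H1 H2]. apply Hd.
  - change (Rabs (x - a) < d). rewrite Rabs_right; lra.
  - exact H1.
Qed.

Lemma deriv_cont (g : R -> R) t dg : is_derive g t dg -> filterlim g (locally t) (locally (g t)).
Proof.
  intros H. assert (Hc : continuous g t) by exact (ex_derive_continuous g t (ex_intro _ dg H)).
  exact Hc.
Qed.

Lemma rc_of_derive g t dg : is_derive g t dg -> rcE g t.
Proof.
  intros H. apply rc_eps.
  assert (Hc := deriv_cont g t dg H).
  intros P HP. apply filter_le_within. apply Hc. exact HP.
Qed.

Lemma wderiv x k t dx dk : is_derive x t dx -> is_derive k t dk ->
  is_derive (fun u => x u * exp (k u)) t (exp (k t) * (dx + x t * dk)).
Proof.
  intros Hx Hk.
  pose proof (is_derive_mult x (fun u => exp (k u)) t dx _ Hx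
    (is_derive_comp exp k t (exp (k t)) dk (is_derive_exp _) Hk) Rmult_comm) as H.
  replace (exp (k t) * (dx + x t * dk)) with
    (plus (mult dx (exp (k t))) (mult (x t) (scal dk (exp (k t))))).
  exact H.
  unfold plus, mult, scal; simpl. unfold mult; simpl. ring.
Qed.

Lemma dec g dg a b : a < b ->
  (forall x, a < x <= b -> is_derive g x (dg x)) ->
  (forall x, a < x <= b -> dg x <= 0) -> rcE g a -> g b <= g a.
Proof.
  intros Hab Hd Hneg Hrc.
  assert (Hint : forall x, a < x < b -> g b <= g x).
  { intros x Hx.
    destruct (MVT_gen g x b dg) as [c [Hc Heq]].
    - intros y Hy. apply Hd. rewrite Rmin_left in Hy by lra. rewrite Rmax_right in Hy by lra. lra.
    - intros y Hy. rewrite Rmin_left in Hy by lra. rewrite Rmax_right in Hy by lra.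
      apply continuity_pt_filterlim. apply (deriv_cont g y (dg y)). apply Hd. lra.
    - rewrite Rmin_left in Hc by lra. rewrite Rmax_right in Hc by lra.
      assert (dg c <= 0) by (apply Hneg; lra).
      assert (dg c * (b - x) <= 0). { apply Rmult_le_0_r; lra. } lra. }
  destruct (Rle_or_lt (g b) (g a)) as [H|H]; [exact H|].
  destruct (Hrc (g b - g a)) as [d [Hd0 Hd1]]; [lra|].
  set (x := a + Rmin d (b - a) / 2).
  assert (Hm1 : Rmin d (b - a) <= d) by apply Rmin_l.
  assert (Hm2 : Rmin d (b - a) <= b - a) by apply Rmin_r.
  assert (Hm3 : 0 < Rmin d (b - a)) by (apply Rmin_glb_lt; lra).
  assert (H2 := Hd1 x ltac:(unfold x; lra)).
  assert (H1 := Hint x ltac:(unfold x; lra)). apply Rabs_def2 in H2. lra.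
Qed.

Lemma inc g dg a b : a < b ->
  (forall x, a < x <= b -> is_derive g x (dg x)) ->
  (forall x, a < x <= b -> 0 <= dg x) -> rcE g a -> g a <= g b.
Proof.
  intros Hab Hd Hpos Hrc.
  assert (- g b <= - g a); [|lra].
  apply (dec (fun u => - g u) (fun u => - dg u) a b Hab).
  - intros x Hx. exact (is_derive_opp (K:=R_AbsRing) (V:=R_NormedModule) g x (dg x) (Hd x Hx)).
  - intros x Hx. specialize (Hpos x Hx). lra.
  - intros eps He. destruct (Hrc eps He) as [d [Hd0 Hd1]]. exists d. split; auto.
    intros x Hx. replace (- g x - - g a) with (- (g x - g a)) by ring.
    rewrite Rabs_Ropp. auto.
Qed.

Lemma rcE_fl g a : rcE g a -> filterlim g (at_right a) (locally (g a)).
Proof.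
  intros H P [eps HP].
  destruct (H eps (cond_pos eps)) as [d [Hd0 Hd1]].
  exists (mkposreal d Hd0). intros y Hy Hay. apply HP.
  change (Rabs (g y - g a) < eps). apply Hd1.
  change (Rabs (y - a) < d) in Hy. apply Rabs_def2 in Hy. lra.
Qed.

Lemma rc_mul_exp x k a dk : rcE x a -> is_derive k a dk ->
  rcE (fun u => x u * exp (k u)) a.
Proof.
  intros Hx Hk. apply rc_eps.
  assert (He : is_derive (fun u => exp (k u)) a (exp (k a) * dk)).
  { pose proof (is_derive_comp exp k a (exp (k a)) dk (is_derive_exp _) Hk) as H.
    replace (exp (k a) * dk) with (scal dk (exp (k a))). exact H.
    unfold scal; simpl; unfold mult; simpl; ring. }
  assert (Hc := deriv_cont _ _ _ He).
  assert (Hc' : filterlim (fun u => exp (k u)) (at_right a) (locally (exp (k a)))).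
  { intros P HP. apply filter_le_within. apply Hc. exact HP. }
  apply (filterlim_comp_2 x (fun u => exp (k u)) Rmult (rcE_fl x a Hx) Hc').
  exact (filterlim_mult (K:=R_AbsRing) (x a) (exp (k a))).
Qed.

Lemma deriv_lin p u : is_derive (fun v => p * v) u p.
Proof. auto_derive; auto; ring. Qed.

Lemma pos x h :
  (forall t, 0 < t -> is_derive x t (x t * h t)) -> rcE x 0 -> 0 <= x 0 ->
  (forall s, 0 <= s -> exists eta M, 0 < eta /\ forall u, s < u < s + eta -> h u <= M) ->
  forall t, 0 <= t -> 0 <= x t.
Proof.
  intros Hd Hrc0 Hx0 Hb t1 Ht1.
  destruct (Rle_or_lt 0 (x t1)) as [H|Hneg]; [exact H|exfalso].
  assert (Ht1p : 0 < t1). { destruct Ht1 as [H|H]; [exact H|subst; lra]. }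
  set (E := fun t => 0 <= t <= t1 /\ 0 <= x t).
  destruct (completeness E) as [s [Hub Hlub]].
  { exists t1. intros y [Hy _]. lra. }
  { exists 0. split; lra. }
  assert (Hs0 : 0 <= s) by (apply Hub; split; lra).
  assert (Hst1 : s <= t1). { apply Hlub. intros y [Hy _]. lra. }
  assert (Hneg_after : forall u, s < u <= t1 -> x u < 0).
  { intros u Hu. destruct (Rlt_or_le (x u) 0) as [H|H]; [exact H|].
    assert (u <= s) by (apply Hub; split; lra). lra. }
  assert (Hrcs : rcE x s).
  { destruct Hs0 as [Hs|Hs]. apply (rc_of_derive x s (x s * h s)). apply Hd; lra.
    subst s. exact Hrc0. }
  assert (Hxs : 0 <= x s).
  { destruct Hs0 as [Hs|Hs]; [|subst s; exact Hx0].
    destruct (Rle_or_lt 0 (x s)) as [H|H]; [exact H|exfalso].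
    assert (Hc := deriv_cont x s _ (Hd s Hs)).
    assert (HL : locally (x s) (fun y => y < 0)).
    { exists (mkposreal (- x s) ltac:(lra)). intros y Hy.
      change (Rabs (y - x s) < - x s) in Hy. apply Rabs_def2 in Hy. lra. }
    destruct (Hc _ HL) as [d Hdd].
    assert (s <= s - d / 2).
    { apply Hlub. intros y [Hy1 Hy2].
      destruct (Rle_or_lt y (s - d/2)) as [H1|H1]; [exact H1|].
      assert (y <= s) by (apply Hub; split; auto).
      assert (x y < 0). { apply Hdd. change (Rabs (y - s) < d).
        assert (Hdp := cond_pos d). rewrite Rabs_left1; lra. } lra. }
    assert (Hdp := cond_pos d). lra. }
  assert (Hslt : s < t1). { destruct (Rle_lt_or_eq_dec _ _ Hst1) as [H|H]; [exact H|subst; lra]. }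
  destruct (Hb s ltac:(lra)) as [eta [M [Heta HM]]].
  set (t := Rmin (s + eta / 2) t1).
  assert (Ht : s < t <= t1 /\ t < s + eta).
  { unfold t. assert (Rmin (s + eta / 2) t1 <= s + eta / 2) by apply Rmin_l.
    assert (Rmin (s + eta / 2) t1 <= t1) by apply Rmin_r.
    assert (s < Rmin (s + eta / 2) t1) by (apply Rmin_glb_lt; lra). lra. }
  assert (Hinc : x s * exp (- M * s) <= x t * exp (- M * t)).
  { apply (inc (fun u => x u * exp (- M * u))
      (fun u => exp (- M * u) * (x u * h u + x u * (- M))) s t); [lra| | |].
    - intros u Hu. apply wderiv. apply Hd; lra.
      apply deriv_lin.
    - intros u Hu. apply Rmult_le_pos. apply Rlt_le, exp_pos.
      assert (x u < 0) by (apply Hneg_after; lra).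
      assert (h u <= M) by (apply HM; lra). nra.
    - apply (rc_mul_exp x (fun u => - M * u) s (- M)). exact Hrcs.
      apply deriv_lin. }
  assert (x t < 0) by (apply Hneg_after; lra).
  assert (0 < exp (- M * t)) by apply exp_pos.
  assert (0 < exp (- M * s)) by apply exp_pos.
  nra.
Qed.

Lemma exp_le' x y : x <= y -> exp x <= exp y.
Proof. intros [H|H]. apply Rlt_le, exp_increasing, H. subst; lra. Qed.

Lemma loc_bd g s : rcE g s -> exists d, 0 < d /\ forall u, s < u < s + d -> Rabs (g u) <= Rabs (g s) + 1.
Proof.
  intros H. destruct (H 1 Rlt_0_1) as [d [Hd0 Hd1]]. exists d. split; auto.
  intros u Hu. specialize (Hd1 u Hu).
  pose proof (Rabs_triang_inv (g u) (g s)). lra.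
Qed.

Lemma hbound beta K p q B : 0 < beta -> 0 < K -> Rabs p <= B -> Rabs q <= B ->
  beta / 2 * q * (1 - (p + q) / K) <= beta / 2 * (B * (1 + 2 * B / K)).
Proof.
  intros Hb HK Hp Hq.
  replace (beta / 2 * q * (1 - (p + q) / K)) with (beta / 2 * (q * (1 - (p + q) / K))) by ring.
  apply Rmult_le_compat_l; [lra|].
  eapply Rle_trans; [apply Rle_abs|]. rewrite Rabs_mult.
  assert (H0 : 0 <= Rabs q) by apply Rabs_pos.
  apply Rmult_le_compat; [exact H0 | apply Rabs_pos | exact Hq | ].
  eapply Rle_trans; [apply Rabs_triang|]. rewrite Rabs_Ropp, Rabs_R1.
  unfold Rdiv. rewrite Rabs_mult, (Rabs_right (/ K)) by (apply Rle_ge, Rlt_le, Rinv_0_lt_compat, HK).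
  assert (Rabs (p + q) <= 2 * B) by (pose proof (Rabs_triang p q); lra).
  assert (0 < / K) by (apply Rinv_0_lt_compat, HK).
  nra.
Qed.

Lemma mL_bound K f m : 0 < K -> 0 <= f -> 0 <= m -> m * Lfac K f m <= K / 4.
Proof.
  intros HK Hf Hm. unfold Lfac.
  assert (Hr : 0 < / K) by (apply Rinv_0_lt_compat, HK).
  assert (HKr : K * / K = 1) by (field; lra).
  assert (0 <= (m - K/2)^2 * / K) by (apply Rmult_le_pos; [apply pow2_ge_0|lra]).
  assert (0 <= m * f * / K) by (apply Rmult_le_pos; [nra|lra]).
  unfold Rdiv. nra.
Qed.

Lemma fL_bound K f m : 0 < K -> 0 <= f -> 0 <= m -> f * Lfac K f m <= f.
Proof.
  intros HK Hf Hm. unfold Lfac.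
  assert (Hr : 0 < / K) by (apply Rinv_0_lt_compat, HK).
  assert (0 <= f * (f + m) * / K) by (apply Rmult_le_pos; [nra|lra]).
  unfold Rdiv. nra.
Qed.

Lemma decay_lim g C k : 0 < k -> 0 <= C -> (forall t, 0 <= t -> 0 <= g t <= C * exp (- k * t)) ->
  is_lim g p_infty 0.
Proof.
  intros Hk HC Hg P [eps HP].
  assert (He := cond_pos eps).
  exists (Rmax 0 (ln ((C + 1) / eps) / k)). intros t Ht.
  apply HP. change (Rabs (g t - 0) < eps).
  assert (H0 := Rmax_l 0 (ln ((C + 1) / eps) / k)).
  assert (H1 := Rmax_r 0 (ln ((C + 1) / eps) / k)).
  destruct (Hg t ltac:(lra)) as [Hg1 Hg2].
  rewrite Rminus_0_r, Rabs_right by lra.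
  assert (Hq : 0 < (C + 1) / eps) by (apply Rdiv_lt_0_compat; lra).
  assert (Hkt : ln ((C + 1) / eps) < k * t).
  { assert (ln ((C + 1) / eps) / k < t) by lra.
    apply (Rmult_lt_compat_l k) in H; [|lra].
    replace (k * (ln ((C + 1) / eps) / k)) with (ln ((C + 1) / eps)) in H by (field; lra). lra. }
  assert (Hex : exp (- k * t) < / ((C + 1) / eps)).
  { rewrite <- (exp_ln _ Hq), <- exp_Ropp. apply exp_increasing. lra. }
  assert (Hinv : / ((C + 1) / eps) = eps / (C + 1)) by (field; lra).
  rewrite Hinv in Hex.
  assert (C * exp (- k * t) <= C * (eps / (C + 1))) by (apply Rmult_le_compat_l; lra).
  assert (C * (eps / (C + 1)) < eps).
  { apply (Rmult_lt_reg_r (C + 1)); [lra|].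
    replace (C * (eps / (C + 1)) * (C + 1)) with (C * eps) by (field; lra). nra. }
  lra.
Qed.

Lemma rc_at (g : R -> R) (dg : R -> R) s : 0 <= s ->
  (forall t, 0 < t -> is_derive g t (dg t)) ->
  filterlim g (at_right 0) (locally (g 0)) -> rcE g s.
Proof.
  intros [Hs|Hs] Hd H0.
  - apply (rc_of_derive g s (dg s)). apply Hd; lra.
  - subst. apply rc_eps. exact H0.
Qed.

Lemma key (beta delta K eta1 eta2 : R) f m :
  0 < beta < 1 -> 0 < delta < 1 -> 0 < K ->
  0 <= eta1 -> 0 <= eta2 -> eta2 < delta ->
  beta * K < 2 * delta + eta1 - eta2 ->
  is_solution beta delta eta1 eta2 K f m -> 0 <= f 0 -> 0 <= m 0 ->
  forall t, 0 <= t -> 0 <= f t /\ 0 <= m t /\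
    f t <= f 0 * exp (- (delta + eta1 - beta * K / 8) * t) /\
    m t <= m 0 * exp (beta * f 0 / (2 * (delta + eta1 - beta * K / 8))) * exp (- (delta - eta2) * t).
Proof.
  intros Hb Hd HK He1 He2 He Hbk [Hder [Hf0c Hm0c]] Hf0 Hm0.
  set (c := delta + eta1 - beta * K / 8).
  set (bb := delta - eta2).
  assert (Hc : 0 < c) by (unfold c; lra).
  assert (Hbb : 0 < bb) by (unfold bb; lra).
  set (hf := fun u => beta / 2 * m u * Lfac K (f u) (m u) - delta - eta1).
  set (hm := fun u => beta / 2 * f u * Lfac K (f u) (m u) - delta + eta2).
  assert (Hdf : forall t, 0 < t -> is_derive f t (f t * hf t)).
  { intros t Ht. destruct (Hder t Ht) as [H _].
    replace (f t * hf t) with (rhs_f beta delta eta1 K (f t) (m t)) by (unfold rhs_f, hf; cbv beta; field).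
    exact H. }
  assert (Hdm : forall t, 0 < t -> is_derive m t (m t * hm t)).
  { intros t Ht. destruct (Hder t Ht) as [_ H].
    replace (m t * hm t) with (rhs_m beta delta eta2 K (f t) (m t)) by (unfold rhs_m, hm; cbv beta; field).
    exact H. }
  assert (Hrcf : forall s, 0 <= s -> rcE f s) by (intros s Hs; exact (rc_at f _ s Hs Hdf Hf0c)).
  assert (Hrcm : forall s, 0 <= s -> rcE m s) by (intros s Hs; exact (rc_at m _ s Hs Hdm Hm0c)).
  assert (Hloc : forall s, 0 <= s -> exists eta B, 0 < eta /\
     forall u, s < u < s + eta -> Rabs (f u) <= B /\ Rabs (m u) <= B).
  { intros s Hs. destruct (loc_bd f s (Hrcf s Hs)) as [d1 [Hd1 H1]].
    destruct (loc_bd m s (Hrcm s Hs)) as [d2 [Hd2 H2]].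
    exists (Rmin d1 d2), (Rmax (Rabs (f s) + 1) (Rabs (m s) + 1)). split.
    apply Rmin_glb_lt; auto.
    intros u Hu. assert (Rmin d1 d2 <= d1) by apply Rmin_l. assert (Rmin d1 d2 <= d2) by apply Rmin_r.
    pose proof (Rmax_l (Rabs (f s) + 1) (Rabs (m s) + 1)).
    pose proof (Rmax_r (Rabs (f s) + 1) (Rabs (m s) + 1)).
    split. pose proof (H1 u ltac:(lra)); lra. pose proof (H2 u ltac:(lra)); lra. }
  assert (Hfpos : forall t, 0 <= t -> 0 <= f t).
  { apply (pos f hf Hdf (Hrcf 0 (Rle_refl 0)) Hf0).
    intros s Hs. destruct (Hloc s Hs) as [eta [B [Heta HB]]].
    exists eta, (beta / 2 * (B * (1 + 2 * B / K))). split; auto.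
    intros u Hu. destruct (HB u Hu) as [Hfu Hmu]. unfold hf, Lfac.
    pose proof (hbound beta K (f u) (m u) B ltac:(lra) HK Hfu Hmu). lra. }
  assert (Hmpos : forall t, 0 <= t -> 0 <= m t).
  { apply (pos m hm Hdm (Hrcm 0 (Rle_refl 0)) Hm0).
    intros s Hs. destruct (Hloc s Hs) as [eta [B [Heta HB]]].
    exists eta, (beta / 2 * (B * (1 + 2 * B / K)) + eta2). split; auto.
    intros u Hu. destruct (HB u Hu) as [Hfu Hmu]. unfold hm, Lfac.
    pose proof (hbound beta K (m u) (f u) B ltac:(lra) HK Hmu Hfu).
    replace (f u + m u) with (m u + f u) by ring. lra. }
  assert (Hfb : forall t, 0 <= t -> f t <= f 0 * exp (- c * t)).
  { intros t [Ht|Ht]; [|subst; rewrite Rmult_0_r, exp_0; lra].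
    assert (H : f t * exp (c * t) <= f 0 * exp (c * 0)).
    { apply (dec (fun u => f u * exp (c * u)) (fun u => exp (c * u) * (f u * hf u + f u * c)) 0 t Ht).
      - intros u Hu. apply wderiv. apply Hdf; lra. apply deriv_lin.
      - intros u Hu. assert (0 < exp (c * u)) by apply exp_pos.
        assert (0 <= f u) by (apply Hfpos; lra).
        assert (0 <= m u) by (apply Hmpos; lra).
        pose proof (mL_bound K (f u) (m u) HK H0 H1).
        assert (hf u + c <= 0) by (unfold hf, c; nra).
        assert (f u * (hf u + c) <= 0) by nra. nra.
      - apply (rc_mul_exp f (fun u => c * u) 0 c). apply Hrcf; lra. apply deriv_lin. }
    rewrite Rmult_0_r, exp_0, Rmult_1_r in H.
    assert (Hx : exp (- c * t) * exp (c * t) = 1) by (rewrite <- exp_plus; replace (- c * t + c * t) with 0 by ring; apply exp_0).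
    assert (0 < exp (- c * t)) by apply exp_pos.
    apply (Rmult_le_compat_l (exp (- c * t))) in H; [|lra].
    replace (exp (- c * t) * (f t * exp (c * t))) with (f t * (exp (- c * t) * exp (c * t))) in H by ring.
    rewrite Hx in H. lra. }
  set (P := beta * f 0 / (2 * c)).
  assert (HP : 0 <= P) by (unfold P; apply Rmult_le_pos; [nra| apply Rlt_le, Rinv_0_lt_compat; lra]).
  set (k := fun u => bb * u - P * (1 - exp (- c * u))).
  assert (Hk : forall u, is_derive k u (bb - beta / 2 * f 0 * exp (- c * u))).
  { intros u. unfold k. auto_derive; auto. unfold P. field. lra. }
  assert (Hmb : forall t, 0 <= t -> m t <= m 0 * exp P * exp (- bb * t)).
  { intros t [Ht|Ht].
    2:{ subst. rewrite Rmult_0_r, exp_0, Rmult_1_r.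
        assert (1 <= exp P) by (rewrite <- exp_0; apply exp_le'; lra). nra. }
    assert (H : m t * exp (k t) <= m 0 * exp (k 0)).
    { apply (dec (fun u => m u * exp (k u))
         (fun u => exp (k u) * (m u * hm u + m u * (bb - beta / 2 * f 0 * exp (- c * u)))) 0 t Ht).
      - intros u Hu. apply wderiv. apply Hdm; lra. apply Hk.
      - intros u Hu. assert (0 < exp (k u)) by apply exp_pos.
        assert (0 <= f u) by (apply Hfpos; lra).
        assert (0 <= m u) by (apply Hmpos; lra).
        pose proof (fL_bound K (f u) (m u) HK H0 H1).
        pose proof (Hfb u ltac:(lra)).
        assert (hm u + (bb - beta / 2 * f 0 * exp (- c * u)) <= 0) by (unfold hm, bb; nra).
        assert (m u * (hm u + (bb - beta / 2 * f 0 * exp (- c * u))) <= 0) by nra. nra.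
      - apply (rc_mul_exp m k 0 (bb - beta / 2 * f 0 * exp (- c * 0))). apply Hrcm; lra. apply Hk. }
    assert (Hk0 : k 0 = 0) by (unfold k; cbv beta; rewrite !Rmult_0_r, exp_0; ring).
    rewrite Hk0, exp_0, Rmult_1_r in H.
    assert (Hx : exp (- k t) * exp (k t) = 1) by (rewrite <- exp_plus; replace (- k t + k t) with 0 by ring; apply exp_0).
    assert (0 < exp (- k t)) by apply exp_pos.
    apply (Rmult_le_compat_l (exp (- k t))) in H; [|lra].
    replace (exp (- k t) * (m t * exp (k t))) with (m t * (exp (- k t) * exp (k t))) in H by ring.
    rewrite Hx in H.
    assert (exp (- k t) <= exp P * exp (- bb * t)).
    { rewrite <- exp_plus. apply exp_le'. unfold k.
      assert (0 < exp (- c * t)) by apply exp_pos. nra. }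
    assert (m 0 * exp (- k t) <= m 0 * (exp P * exp (- bb * t))) by (apply Rmult_le_compat_l; lra).
    lra. }
  intros t Ht. split; [auto|split; [auto|split]].
  - replace (- (delta + eta1 - beta * K / 8) * t) with (- c * t) by (unfold c; ring). auto.
  - replace (- (delta - eta2) * t) with (- bb * t) by (unfold bb; ring).
    replace (beta * f 0 / (2 * (delta + eta1 - beta * K / 8))) with P by (unfold P, c; ring). auto.
Qed.

Theorem mainTheorem4 (beta delta K eta1 eta2 : R) :
  0 < beta < 1 -> 0 < delta < 1 -> 0 < K ->
  0 <= eta1 -> 0 <= eta2 -> eta2 < delta ->
  beta * K < 2 * delta + eta1 - eta2 ->
  GAS_origin beta delta eta1 eta2 K.
Proof.
  intros Hb Hd HK He1 He2 He Hbk.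
  set (c := delta + eta1 - beta * K / 8).
  assert (Hc : 0 < c) by (unfold c; lra).
  split.
  - intros eps Heps.
    set (Q := beta * 1 / (2 * c)).
    assert (HQ : 0 < exp (- Q)) by apply exp_pos.
    exists (Rmin (Rmin 1 eps) (eps * exp (- Q))). split.
    { apply Rmin_glb_lt; [apply Rmin_glb_lt; lra|nra]. }
    intros f m Hsol Hf0 Hm0 Hfd Hmd t Ht.
    pose proof (Rmin_l (Rmin 1 eps) (eps * exp (- Q))).
    pose proof (Rmin_r (Rmin 1 eps) (eps * exp (- Q))).
    pose proof (Rmin_l 1 eps). pose proof (Rmin_r 1 eps).
    destruct (key beta delta K eta1 eta2 f m Hb Hd HK He1 He2 He Hbk Hsol Hf0 Hm0 t Ht)
      as [Hf [Hm [Hfb Hmb]]].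
    fold c in Hfb, Hmb.
    rewrite !Rabs_right by lra. split.
    + assert (exp (- c * t) <= 1) by (rewrite <- exp_0; apply exp_le'; nra). nra.
    + assert (exp (- (delta - eta2) * t) <= 1) by (rewrite <- exp_0; apply exp_le'; nra).
      assert (exp (beta * f 0 / (2 * c)) <= exp Q).
      { apply exp_le'. unfold Q. unfold Rdiv. apply Rmult_le_compat_r.
        apply Rlt_le, Rinv_0_lt_compat; lra. nra. }
      assert (Hx : exp Q * exp (- Q) = 1) by (rewrite <- exp_plus; replace (Q + - Q) with 0 by ring; apply exp_0).
      assert (0 < exp (beta * f 0 / (2 * c))) by apply exp_pos.
      assert (0 < exp (- (delta - eta2) * t)) by apply exp_pos.
      assert (m 0 * exp (beta * f 0 / (2 * c)) <= m 0 * exp Q) by (apply Rmult_le_compat_l; lra).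
      assert (m 0 * exp (beta * f 0 / (2 * c)) * exp (- (delta - eta2) * t) <= m 0 * exp (beta * f 0 / (2 * c))).
      { assert (0 <= m 0 * exp (beta * f 0 / (2 * c))) by nra. nra. }
      assert (m 0 * exp Q < eps).
      { assert (0 < exp Q) by apply exp_pos.
        assert (Hy : m 0 * exp Q < eps * exp (- Q) * exp Q) by nra.
        replace (eps * exp (- Q) * exp Q) with (eps * (exp Q * exp (- Q))) in Hy by ring.
        rewrite Hx in Hy. lra. }
      lra.
  - intros f m Hsol Hf0 Hm0.
    pose proof (key beta delta K eta1 eta2 f m Hb Hd HK He1 He2 He Hbk Hsol Hf0 Hm0) as Hk.
    split.
    + apply (decay_lim f (f 0) c Hc Hf0). intros t Ht.
      destruct (Hk t Ht) as [Hf [_ [Hfb _]]]. fold c in Hfb. lra.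
    + apply (decay_lim m (m 0 * exp (beta * f 0 / (2 * c))) (delta - eta2)); [lra| |].
      { assert (0 < exp (beta * f 0 / (2 * c))) by apply exp_pos. nra. }
      intros t Ht. destruct (Hk t Ht) as [_ [Hm [_ Hmb]]]. fold c in Hmb. lra.
Qed.
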